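(* For every $z\in Z$ and all $v,w\in W$, \[ \pi\bullet\big(\zeta(v)_{I_w}\cdot z\big)=\pi\bullet\big([v]\cdot(Y_{I_w}\bullet z)\big)=(Y_{I_w}\bullet z)_v\,\mathbf{1}, \] where $(y)_v$ denotes the $v$-coordinate of $y\in Z$.
   Context: Let $\Phi$ be a finite real root system with simple roots $\Pi$, positive roots $\Phi_+$, negative roots $\Phi_-=-\Phi_+$, and finite Coxeter group $W$ generated by the reflections $s_\alpha$, $s_\alpha(\lambda)=\lambda-\alpha^\vee(\lambda)\alpha$. Let $\mathcal O\subset\mathbb R$ be its coefficient ring, $\Lambda_r$ the $\mathcal O$-span of $\Pi$, $\Lambda_w=\{\lambda\in\Lambda_r\otimes K:\alpha^\vee(\lambda)\in\mathcal O\ \forall\alpha\in\Phi_+\}$ ($K$ the fraction field of $\mathcal O$), and $\Lambda$ a free $\mathcal O$-module with $\Lambda_r\subset\Lambda\subset\Lambda_w$. Let $F$ be a one-dimensional commutative formal group law over a commutative ring $R$, and $S$ the formal group ring: $S=R[[x_\lambda]]_{\lambda\in\Lambda}/\overline{J}$ where $\overline J$ is the closure of the ideal generated by $x_0$ and $x_{\lambda+\mu}-F(x_\lambda,x_\mu)$ (no completion if $F$ is a polynomial); in the non-crystallographic case $F$ is additive, $R=\mathcal O$ and $S=\mathrm{Sym}_{\mathcal O}(\Lambda)$ with $x_\lambda=\lambda$. $W$ acts on $S$ by $w(x_\lambda)=x_{w(\lambda)}$. Assume each $x_\alpha$ is regular in $S$ and that for distinct $\alpha,\alpha'\in\Phi_+$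 and $f\in S$, $x_\alpha\mid x_{\alpha'}f$ implies $x_\alpha\mid f$. Let $Q=S[1/x_\alpha:\alpha\in\Phi_+]$ and $Q_W$ the twisted group algebra: the free left $Q$-module on $\{\delta_w\}_{w\in W}$ with $\delta_w q=w(q)\delta_w$. Put $Y_\alpha=\frac1{x_{-\alpha}}+\frac1{x_\alpha}\delta_{s_\alpha}$, $Y_i=Y_{\alpha_i}$ for simple roots $\alpha_i$. For each $w\in W$ fix a reduced expression $w=s_{i_1}\cdots s_{i_l}$, write $I_w=(i_1,\dots,i_l)$, $Y_{I_w}=Y_{i_1}\cdots Y_{i_l}$, and $I_w^{-1}=(i_l,\dots,i_1)$, $Y_{I_w^{-1}}=Y_{i_l}\cdots Y_{i_1}$. The structure algebra is $Z=\{(z_v)_{v\in W}\in\bigoplus_{v\in W}S: z_{s_\alpha w}-z_w\in x_\alpha S\ \forall w\in W,\alpha\in\Phi_+\}$ with coordinatewise product. The Hecke action of $Q_W$ is $q\delta_w\bullet(z_v)_v=(v(q)z_{vw})_v$ and the Weyl action is $q\delta_w\odot(z_v)_v=(q\,w(z_{w^{-1}v}))_v$. Let $\mathbf 1=(1)_v$, $x_\Pi=\prod_{\alpha\in\Phi_-}x_\alpha$, $[e]\in Z$ the element with $e$-coordinate $x_\Pi$ and all other coordinates $0$, $[v]=\delta_v\odot[e]$, and twisted Schubert classes $\zeta(v)_{I_w}=Y_{I_w^{-1}}\bullet[v]$. The push-forward element is $\pi=\sum_{w\in W}\frac{1}{w(x_\Pi)}\delta_w\in Q_W$, acting on $Z$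 by the Hecke action. *)

(* Defs.v *)
From HB Require Import structures.
From mathcomp Require Import all_boot all_order all_algebra all_fingroup.
From mathcomp Require Import reals.
Set Implicit Arguments.
Unset Strict Implicit.
Unset Printing Implicit Defensive.
Import Order.TTheory GRing.Theory Num.Theory.
Local Open Scope ring_scope.

(* roots.  A coroot alpha^vee is represented by a row vector, acting    *)
(* by the standard pairing.                                             *)

Definition pairing (R : realType) (n : nat) (f l : 'rV[R]_n) : R :=
  \sum_(i < n) f 0 i * l 0 i.

Definition refl (R : realType) (n : nat) (cor : 'rV[R]_n -> 'rV[R]_n)
  (a l : 'rV[R]_n) : 'rV[R]_n := l - pairing (cor a) l *: a.

Record RootSystem (R : realType) (n : nat) := {
  roots : seq 'rV[R]_n;
  coroot : 'rV[R]_n -> 'rV[R]_n;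
  simple : 'I_n -> 'rV[R]_n;
  coord : 'rV[R]_n -> 'I_n -> R;
  roots_uniq : uniq roots;
  roots_nz : (0 : 'rV[R]_n) \notin roots;
  roots_reduced : forall a b c, a \in roots -> b \in roots -> b = c *: a ->
      c = 1 \/ c = -1;
  coroot_root : forall a, a \in roots -> pairing (coroot a) a = 2;
  refl_roots : forall a b, a \in roots -> b \in roots ->
      refl coroot a b \in roots;
  simple_roots : forall i, simple i \in roots;
  simple_free : forall c : 'I_n -> R, \sum_(i < n) c i *: simple i = 0 ->
      forall i, c i = 0;
  coordE : forall l, l = \sum_(i < n) coord l i *: simple i;
  roots_sign : forall a, a \in roots ->
      [forall i, 0 <= coord a i] || [forall i, coord a i <= 0]
}.

Section RS.
Variables (R : realType) (n : nat) (Phi : RootSystem R n).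
Definition posroot (a : 'rV[R]_n) : bool :=
  (a \in roots Phi) && [forall i, 0 <= coord Phi a i].
Definition negroot (a : 'rV[R]_n) : bool :=
  (a \in roots Phi) && [forall i, coord Phi a i <= 0] && (a != 0).
Definition crefl (a : 'rV[R]_n) := refl (coroot Phi) a.

(* The coefficient ring O: the subring of R generated by the numbers
   alpha^vee(beta), alpha, beta in Phi (this is Z for crystallographic Phi). *)
Definition subring_of (P : R -> Prop) :=
  [/\ P 0, P 1, forall a b, P a -> P b -> P (a - b) & forall a b, P a -> P b -> P (a * b)].
Definition coefO (r : R) : Prop :=
  forall P : R -> Prop, subring_of P ->
    (forall a b, a \in roots Phi -> b \in roots Phi -> P (pairing (coroot Phi a) b)) ->
    P r.
Definition coefK (r : R) : Prop :=
  exists a b, [/\ coefO a, coefO b, b != 0 & r = a / b].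
Definition root_lattice (l : 'rV[R]_n) : Prop :=
  exists c : 'I_n -> R, (forall i, coefO (c i)) /\ l = \sum_(i < n) c i *: simple Phi i.
Definition weight_lattice (l : 'rV[R]_n) : Prop :=
  (exists c : 'I_n -> R, (forall i, coefK (c i)) /\ l = \sum_(i < n) c i *: simple Phi i)
  /\ forall a, posroot a -> coefO (pairing (coroot Phi a) l).
Definition admissible_lattice (L : 'rV[R]_n -> Prop) : Prop :=
  [/\ L 0, (forall l m, L l -> L m -> L (l + m)),
      (forall c l, coefO c -> L l -> L (c *: l)),
      (forall l, root_lattice l -> L l) &
      (forall l, L l -> weight_lattice l)] /\
  (exists k (b : 'I_k -> 'rV[R]_n),
        [/\ (forall i, L (b i)),
            (forall l, L l -> exists c : 'I_k -> R,
                 (forall i, coefO (c i)) /\ l = \sum_(i < k) c i *: b i) &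
            (forall c : 'I_k -> R, (forall i, coefO (c i)) ->
                 \sum_(i < k) c i *: b i = 0 -> forall i, c i = 0)]).
End RS.

Record Setting (R : realType) (n : nat) := {
  Phi : RootSystem R n;
  gT : finGroupType;
  W : {group gT};
  wact : gT -> 'rV[R]_n -> 'rV[R]_n;
  sref : 'rV[R]_n -> gT;
  wact1 : forall l, wact 1 l = l;
  wactM : forall u w l, u \in W -> w \in W -> wact (u * w) l = wact u (wact w l);
  wact_faithful : forall u w, u \in W -> w \in W -> (forall l, wact u l = wact w l) -> u = w;
  sref_in : forall a, a \in roots Phi -> sref a \in W;
  wact_sref : forall a l, a \in roots Phi -> wact (sref a) l = crefl Phi a l;
  W_gen : forall H : {group gT}, (forall a, posroot Phi a -> sref a \in H) ->
      W \subset H;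
  Lam : 'rV[R]_n -> Prop;
  Lam_adm : admissible_lattice Phi Lam;
  S : comNzRingType;
  x : 'rV[R]_n -> S;
  sact : gT -> {rmorphism S -> S};
  sact1 : forall s, sact 1 s = s;
  sactM : forall u w s, u \in W -> w \in W -> sact (u * w) s = sact u (sact w s);
  sact_x : forall w l, w \in W -> Lam l -> sact w (x l) = x (wact w l);
  x0 : x 0 = 0;
  x_opp : forall l, Lam l -> exists u v : S, u * v = 1 /\ x (- l) = x l * u;
  x_regular : forall a (f : S), a \in roots Phi -> x a * f = 0 -> f = 0;
  x_div : forall a a' (f : S), posroot Phi a -> posroot Phi a' -> a != a' ->
      (exists g, x a' * f = x a * g) -> exists g, f = x a * g;
  Q : comUnitRingType;
  iota : {rmorphism S -> Q};
  iota_unit : forall a, posroot Phi a -> iota (x a) \is a GRing.unit;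
  iota_surj : forall q : Q, exists (s : S) (l : seq 'rV[R]_n),
      all (posroot Phi) l /\ q = iota s / iota (\prod_(a <- l) x a);
  iota_ker : forall s : S, iota s = 0 -> exists l : seq 'rV[R]_n,
      all (posroot Phi) l /\ s * \prod_(a <- l) x a = 0;
  qact : gT -> {rmorphism Q -> Q};
  qact_iota : forall w s, w \in W -> qact w (iota s) = iota (sact w s)
}.

Section Ops.
Variables (R : realType) (n : nat) (D : Setting R n).
Local Notation gT := (gT D).
Local Notation Q := (Q D).
Local Notation W := (W D).

Definition sI (i : 'I_n) : gT := @sref _ _ D (simple (Phi D) i).
Definition word_prod (I : seq 'I_n) : gT := \prod_(i <- I) sI i.
Definition reduced_expr (I : seq 'I_n) (w : gT) : Prop :=
  word_prod I = w /\ forall J : seq 'I_n, word_prod J = w -> (size I <= size J)%N.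

(* twisted group algebra Q_W : sum_w q_w delta_w, stored as w |-> q_w *)
Definition QW := gT -> Q.
Definition qdelta (w : gT) (q : Q) : QW := fun u => if u == w then q else 0.
Definition qw_mul (a b : QW) : QW :=
  fun y => \sum_(u in W) a u * @qact _ _ D u (b (u^-1 * y)%g).
Definition qw_add (a b : QW) : QW := fun u => a u + b u.

Definition Yroot (a : 'rV[R]_n) : QW :=
  qw_add (qdelta 1 (@iota _ _ D (@x _ _ D (- a)))^-1) (qdelta (@sref _ _ D a) (@iota _ _ D (@x _ _ D a))^-1).
Definition Ysimple (i : 'I_n) : QW := Yroot (simple (Phi D) i).
Definition Yword (I : seq 'I_n) : QW := foldr (fun i acc => qw_mul (Ysimple i) acc) (qdelta 1 1) I.

(* elements of (+)_{v in W} Q, indexed by v in gT (only v in W matter) *)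
Definition tupQ := gT -> Q.
(* Hecke action: q delta_w . (z_v) = (v(q) z_{vw})_v *)
Definition hecke (X : QW) (z : tupQ) : tupQ :=
  fun v => \sum_(w in W) @qact _ _ D v (X w) * z (v * w)%g.
Definition weyl (X : QW) (z : tupQ) : tupQ :=
  fun v => \sum_(w in W) X w * @qact _ _ D w (z (w^-1 * v)%g).
Definition tmul (y z : tupQ) : tupQ := fun v => y v * z v.
Definition tone : tupQ := fun _ => 1.

(* structure algebra Z, as a predicate on tuples of elements of S *)
Definition inZ (z : gT -> S D) : Prop :=
  forall w a, w \in W -> posroot (Phi D) a ->
    exists f : S D, z (@sref _ _ D a * w)%g - z w = @x _ _ D a * f.
Definition toQ (z : gT -> S D) : tupQ := fun v => @iota _ _ D (z v).

Definition xPi : S D := \prod_(b <- roots (Phi D) | negroot (Phi D) b) @x _ _ D b.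
(* [e] and [v] = delta_v (.) [e] *)
Definition pt_e : tupQ := fun u => if u == 1%g then @iota _ _ D xPi else 0.
Definition pt (v : gT) : tupQ := weyl (qdelta v 1) pt_e.
Definition zeta (v : gT) (I : seq 'I_n) : tupQ := hecke (Yword (rev I)) (pt v).
Definition pushpi : QW := fun w => (@qact _ _ D w (@iota _ _ D xPi))^-1.
End Ops.

(* Main.v *)
Require Import Defs.
From HB Require Import structures.
From mathcomp Require Import all_boot all_order all_algebra all_fingroup.
From mathcomp Require Import reals boolp ring lra zify.
Import GRing.Theory Num.Theory Order.TTheory.
Local Open Scope ring_scope.
Set Implicit Arguments.
Unset Strict Implicit.

Lemma pairingD (R : realType) (n : nat) (f l m : 'rV[R]_n) :
  pairing f (l + m) = pairing f l + pairing f m.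
Proof. by rewrite /pairing -big_split; apply: eq_bigr => i _; rewrite mxE mulrDr. Qed.

Lemma pairingZ (R : realType) (n : nat) (f l : 'rV[R]_n) c :
  pairing f (c *: l) = c * pairing f l.
Proof. by rewrite /pairing mulr_sumr; apply: eq_bigr => i _; rewrite mxE mulrCA. Qed.

Lemma pairingC (R : realType) (n : nat) (f l : 'rV[R]_n) :
  pairing f l = pairing l f.
Proof. by rewrite /pairing; apply: eq_bigr => i _; rewrite mulrC. Qed.

Lemma pairingN (R : realType) (n : nat) (f l : 'rV[R]_n) :
  pairing f (- l) = - pairing f l.
Proof. by rewrite -scaleN1r pairingZ mulN1r. Qed.

Lemma pairingB (R : realType) (n : nat) (f l m : 'rV[R]_n) :
  pairing f (l - m) = pairing f l - pairing f m.
Proof. by rewrite pairingD pairingN. Qed.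

Lemma crefl_self (R : realType) (n : nat) (P : RootSystem R n) a :
  a \in Defs.roots P -> crefl P a a = - a.
Proof.
move=> Ha; rewrite /crefl /refl coroot_root // scaler_nat mulr2n opprD addrA.
by rewrite subrr add0r.
Qed.

Lemma crefl_invol (R : realType) (n : nat) (P : RootSystem R n) a l :
  a \in Defs.roots P -> crefl P a (crefl P a l) = l.
Proof.
move=> Ha; rewrite /crefl /refl pairingB pairingZ coroot_root //.
set p := pairing _ l.
by apply/rowP => i; rewrite !mxE; ring.
Qed.

Lemma roots_opp (R : realType) (n : nat) (P : RootSystem R n) a :
  a \in Defs.roots P -> - a \in Defs.roots P.
Proof. by move=> Ha; have := refl_roots Ha Ha; rewrite -/(crefl P a a) crefl_self. Qed.

Lemma coord_sum (R : realType) (n : nat) (P : RootSystem R n) (c : 'I_n -> R) j :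
  Defs.coord P (\sum_i c i *: Defs.simple P i) j = c j.
Proof.
set l := \sum_i _.
have H := @simple_free _ _ P (fun i => Defs.coord P l i - c i).
apply/eqP; rewrite -subr_eq0; apply/eqP; apply: H.
under eq_bigr do rewrite scalerBl.
by rewrite sumrB -Defs.coordE subrr.
Qed.

Lemma coordB (R : realType) (n : nat) (P : RootSystem R n) l m p j :
  Defs.coord P (l - p *: m) j = Defs.coord P l j - p * Defs.coord P m j.
Proof.
have -> : l - p *: m = \sum_i (Defs.coord P l i - p * Defs.coord P m i) *: Defs.simple P i.
  rewrite {1}(Defs.coordE P l) {1}(Defs.coordE P m) scaler_sumr -sumrB.
  by apply: eq_bigr => i _; rewrite scalerBl scalerA.
by rewrite coord_sum.
Qed.

Lemma coordN (R : realType) (n : nat) (P : RootSystem R n) l j :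
  Defs.coord P (- l) j = - Defs.coord P l j.
Proof.
have -> : - l = 0 - 1 *: l by rewrite sub0r scale1r.
rewrite coordB mul1r.
have -> : (0 : 'rV[R]_n) = \sum_i 0 *: Defs.simple P i.
  by rewrite big1 // => i _; rewrite scale0r.
by rewrite coord_sum sub0r.
Qed.

Lemma simple_sum (R : realType) (n : nat) (P : RootSystem R n) i :
  Defs.simple P i = \sum_j (j == i)%:R *: Defs.simple P j.
Proof.
by rewrite (bigD1 i) //= big1 ?eqxx ?scale1r ?addr0 // => k /negbTE ->; rewrite scale0r.
Qed.

Lemma coord_simple (R : realType) (n : nat) (P : RootSystem R n) i j :
  Defs.coord P (Defs.simple P i) j = (j == i)%:R.
Proof. by rewrite {1}simple_sum coord_sum. Qed.

Lemma negroot_opp (R : realType) (n : nat) (P : RootSystem R n) a :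
  negroot P a -> posroot P (- a).
Proof.
case/andP => /andP [Ha /forallP Hc] _; rewrite /posroot roots_opp //=.
by apply/forallP => i; rewrite coordN oppr_ge0.
Qed.

Lemma roots_neq0 (R : realType) (n : nat) (P : RootSystem R n) a :
  a \in Defs.roots P -> a != 0.
Proof. by move=> Ha; apply/eqP => a0; have := roots_nz P; rewrite -a0 Ha. Qed.

Lemma posroot_opp (R : realType) (n : nat) (P : RootSystem R n) a :
  posroot P a -> negroot P (- a).
Proof.
case/andP => Ha /forallP Hc; rewrite /negroot roots_opp //=.
rewrite oppr_eq0 (roots_neq0 Ha) andbT.
by apply/forallP => i; rewrite coordN oppr_le0.
Qed.

Lemma pos_or_neg (R : realType) (n : nat) (P : RootSystem R n) a :
  a \in Defs.roots P -> posroot P a || negroot P a.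
Proof.
move=> Ha; rewrite /posroot /negroot Ha (roots_neq0 Ha) /= andbT.
exact: roots_sign.
Qed.

Lemma coefO_pair (R : realType) (n : nat) (P : RootSystem R n) a b :
  a \in Defs.roots P -> b \in Defs.roots P -> coefO P (pairing (coroot P a) b).
Proof. by move=> Ha Hb Q _ HQ; apply: HQ. Qed.

Lemma coefO_sub (R : realType) (n : nat) (P : RootSystem R n) a b :
  coefO P a -> coefO P b -> coefO P (a - b).
Proof. by move=> Ha Hb Q HQ HQ'; case: (HQ) => _ _ Hs _; apply: Hs; [apply: Ha|apply: Hb]. Qed.

Lemma coefO0 (R : realType) (n : nat) (P : RootSystem R n) : coefO P 0.
Proof. by move=> Q [] . Qed.

Lemma coefO1 (R : realType) (n : nat) (P : RootSystem R n) : coefO P 1.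
Proof. by move=> Q [] . Qed.

Lemma coefON (R : realType) (n : nat) (P : RootSystem R n) a :
  coefO P a -> coefO P (- a).
Proof. by move=> Ha; rewrite -sub0r; apply: coefO_sub => //; apply: coefO0. Qed.

Lemma Lam_add (R : realType) (n : nat) (D : Setting R n) l m :
  Lam D l -> Lam D m -> Lam D (l + m).
Proof. by move: (Lam_adm D); rewrite /admissible_lattice => -[[_ H _ _ _] _]; apply: H. Qed.

Lemma Lam_scale (R : realType) (n : nat) (D : Setting R n) c l :
  coefO (Phi D) c -> Lam D l -> Lam D (c *: l).
Proof. by move: (Lam_adm D); rewrite /admissible_lattice => -[[_ _ H _ _] _]; apply: H. Qed.

Lemma Lam_rootlat (R : realType) (n : nat) (D : Setting R n) l :
  root_lattice (Phi D) l -> Lam D l.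
Proof. by move: (Lam_adm D); rewrite /admissible_lattice => -[[_ _ _ H _] _]; apply: H. Qed.

Lemma Lam_opp (R : realType) (n : nat) (D : Setting R n) l :
  Lam D l -> Lam D (- l).
Proof. by move=> Hl; rewrite -scaleN1r; apply: Lam_scale => //; apply: coefON; apply: coefO1. Qed.

Lemma Lam_simple (R : realType) (n : nat) (D : Setting R n) i :
  Lam D (Defs.simple (Phi D) i).
Proof.
apply: Lam_rootlat; exists (fun j => (j == i)%:R); split; last exact: simple_sum.
by move=> j; case: (j == i); [apply: coefO1|apply: coefO0].
Qed.

Lemma Lam_crefl (R : realType) (n : nat) (D : Setting R n) a l :
  a \in Defs.roots (Phi D) -> l \in Defs.roots (Phi D) -> Lam D a -> Lam D l ->
  Lam D (crefl (Phi D) a l).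
Proof.
move=> Ha Hl La Ll; rewrite /crefl /refl -scaleNr; apply: Lam_add => //.
by apply: Lam_scale => //; apply: coefON; apply: coefO_pair.
Qed.

Lemma crefl_lin (R : realType) (n : nat) (P : RootSystem R n) a c l m :
  crefl P a (c *: l + m) = c *: crefl P a l + crefl P a m.
Proof. by rewrite /crefl /refl pairingD pairingZ; apply/rowP => i; rewrite !mxE; ring. Qed.

Definition wlin (R : realType) (n : nat) (D : Setting R n) (w : gT D) :=
  forall c l m, wact (s0:=D) w (c *: l + m) = c *: wact (s0:=D) w l + wact (s0:=D) w m.

Lemma wact_lin (R : realType) (n : nat) (D : Setting R n) w :
  w \in W D -> wlin w.
Proof.
pose H := [set u | (u \in W D) && `[< wlin u >]].
have gH : group_set H.
  apply/andP; split.
    by rewrite inE group1 /=; apply/asboolP => c l m; rewrite !wact1.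
  apply/subsetP => _ /mulsgP [u v Hu Hv ->].
  move: Hu Hv; rewrite !inE => /andP[Hu /asboolP Lu] /andP [Hv /asboolP Lv].
  by rewrite groupM //=; apply/asboolP => c l m; rewrite !wactM // Lv Lu.
have sWH : W D \subset Group gH.
  apply: W_gen => a Ha; rewrite inE.
  have Ra : a \in Defs.roots (Phi D) by case/andP: Ha.
  rewrite sref_in //=; apply/asboolP => c l m; rewrite !wact_sref //; exact: crefl_lin.
by move=> Hw; move/subsetP/(_ w Hw): sWH; rewrite inE => /andP[_ /asboolP].
Qed.

Lemma wact0 (R : realType) (n : nat) (D : Setting R n) w :
  w \in W D -> wact (s0:=D) w 0 = 0.
Proof.
move=> Hw; have := wact_lin Hw (-1) 0 0.
by rewrite !scaleN1r oppr0 !addr0 addNr.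
Qed.

Lemma wactD (R : realType) (n : nat) (D : Setting R n) w l m :
  w \in W D -> wact (s0:=D) w (l + m) = wact (s0:=D) w l + wact (s0:=D) w m.
Proof. by move=> Hw; have := wact_lin Hw 1 l m; rewrite !scale1r. Qed.

Lemma wactZ (R : realType) (n : nat) (D : Setting R n) w c l :
  w \in W D -> wact (s0:=D) w (c *: l) = c *: wact (s0:=D) w l.
Proof. by move=> Hw; have := wact_lin Hw c l 0; rewrite !addr0 wact0 // addr0. Qed.

Definition Bf (R : realType) (n : nat) (D : Setting R n) (l m : 'rV[R]_n) :=
  \sum_(w in W D) pairing (wact (s0:=D) w l) (wact (s0:=D) w m).

Lemma BfC (R : realType) (n : nat) (D : Setting R n) l m : Bf D l m = Bf D m l.
Proof. by apply: eq_bigr => w _; rewrite pairingC. Qed.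

Lemma BfD (R : realType) (n : nat) (D : Setting R n) l m m' :
  Bf D l (m + m') = Bf D l m + Bf D l m'.
Proof. by rewrite /Bf -big_split; apply: eq_bigr => w Hw; rewrite wactD // pairingD. Qed.

Lemma BfZ (R : realType) (n : nat) (D : Setting R n) l c m :
  Bf D l (c *: m) = c * Bf D l m.
Proof. by rewrite /Bf mulr_sumr; apply: eq_bigr => w Hw; rewrite wactZ // pairingZ. Qed.

Lemma Bf0 (R : realType) (n : nat) (D : Setting R n) l : Bf D l 0 = 0.
Proof. by rewrite -(scale0r 0) BfZ mul0r. Qed.

Lemma BfN (R : realType) (n : nat) (D : Setting R n) l m : Bf D l (- m) = - Bf D l m.
Proof. by rewrite -scaleN1r BfZ mulN1r. Qed.

Lemma Bf_sum (R : realType) (n : nat) (D : Setting R n) l (c : 'I_n -> R) f :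
  Bf D l (\sum_i c i *: f i) = \sum_i c i * Bf D l (f i).
Proof.
apply: (big_rec2 (fun a b => Bf D l b = a)); first exact: Bf0.
by move=> i y1 y2 _ <-; rewrite BfD BfZ.
Qed.

Lemma sum_reindexR (gT : finGroupType) (G : {group gT}) (V : nmodType) s (F : gT -> V) :
  s \in G -> \sum_(w in G) F (w * s)%g = \sum_(w in G) F w.
Proof.
move=> Hs; rewrite [RHS](reindex_inj (mulIg s)) /=.
by apply: eq_bigl => w; rewrite groupMr.
Qed.

Lemma sum_reindexL (gT : finGroupType) (G : {group gT}) (V : nmodType) s (F : gT -> V) :
  s \in G -> \sum_(w in G) F (s * w)%g = \sum_(w in G) F w.
Proof.
move=> Hs; rewrite [RHS](reindex_inj (mulgI s)) /=.
by apply: eq_bigl => w; rewrite groupMl.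
Qed.

Lemma Bf_inv (R : realType) (n : nat) (D : Setting R n) a l m :
  a \in Defs.roots (Phi D) ->
  Bf D (crefl (Phi D) a l) (crefl (Phi D) a m) = Bf D l m.
Proof.
move=> Ha; rewrite /Bf -!wact_sref //.
rewrite -(sum_reindexR (fun w => pairing (wact (s0:=D) w l) (wact (s0:=D) w m)) (sref_in Ha)).
by apply: eq_bigr => w Hw; rewrite !wactM // sref_in.
Qed.

Lemma pairing_sq_ge0 (R : realType) (n : nat) (l : 'rV[R]_n) : 0 <= pairing l l.
Proof. by apply: sumr_ge0 => i _; rewrite -expr2 sqr_ge0. Qed.

Lemma Bf_pos (R : realType) (n : nat) (D : Setting R n) l :
  l != 0 -> 0 < Bf D l l.
Proof.
move=> l0; rewrite /Bf (bigD1 1%g) ?group1 //= wact1.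
apply: ltr_wpDr; first by apply: sumr_ge0 => w _; apply: pairing_sq_ge0.
case: (pickP (fun i => l 0 i != 0)) => [i Hi|H]; last first.
  by move/eqP: l0; case; apply/rowP => i; rewrite mxE; move/negbFE/eqP: (H i).
rewrite /pairing (bigD1 i) //=; apply: ltr_wpDr.
  by apply: sumr_ge0 => j _; rewrite -expr2 sqr_ge0.
by rewrite lt_def mulf_neq0 // -expr2 sqr_ge0.
Qed.

Lemma Bf_coroot (R : realType) (n : nat) (D : Setting R n) a l :
  a \in Defs.roots (Phi D) ->
  2 * Bf D l a = pairing (coroot (Phi D) a) l * Bf D a a.
Proof.
move=> Ha; have := Bf_inv l a Ha.
rewrite crefl_self // /crefl /refl BfN BfC -scaleNr BfD BfZ (BfC D a l).
move=> H; nra.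
Qed.

Definition ht (R : realType) (n : nat) (P : RootSystem R n) (l : 'rV[R]_n) :=
  \sum_i Defs.coord P l i.

Lemma exists_step (R : realType) (n : nat) (D : Setting R n) b :
  posroot (Phi D) b -> (forall i, b != Defs.simple (Phi D) i) ->
  exists j, posroot (Phi D) (crefl (Phi D) (Defs.simple (Phi D) j) b) &&
    (ht (Phi D) (crefl (Phi D) (Defs.simple (Phi D) j) b) < ht (Phi D) b).
Proof.
move=> /andP [Hb Hpos] Hns.
set c := Defs.coord (Phi D) b.
have b0 : b != 0 := roots_neq0 Hb.
have Hsum : Bf D b b = \sum_j c j * Bf D (Defs.simple (Phi D) j) b.
  rewrite {1}(Defs.coordE (Phi D) b) BfC Bf_sum; apply: eq_bigr => j _; by rewrite BfC.
have [j Hj] : exists j, 0 < c j * Bf D (Defs.simple (Phi D) j) b.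
  case: (pickP (fun j => 0 < c j * Bf D (Defs.simple (Phi D) j) b)) => [j Hj|H].
    by exists j.
  have := Bf_pos D b0; rewrite Hsum => Hlt; exfalso.
  have : \sum_j c j * Bf D (Defs.simple (Phi D) j) b <= 0.
    by apply: sumr_le0 => j _; rewrite leNgt H.
  by rewrite leNgt Hlt.
have cj0 : 0 <= c j by move/forallP: Hpos.
have cjp : 0 < c j.
  rewrite lt_def cj0 andbT; apply/eqP => e; by move: Hj; rewrite e mul0r ltxx.
have Bp : 0 < Bf D (Defs.simple (Phi D) j) b by rewrite -(pmulr_rgt0 _ cjp).
have Rj := simple_roots (Phi D) j.
set p := pairing (coroot (Phi D) (Defs.simple (Phi D) j)) b.
have pp : 0 < p.
  have E := Bf_coroot b Rj.
  have Bss := Bf_pos D (roots_neq0 Rj).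
  rewrite -(pmulr_lgt0 _ Bss) -E BfC; nra.
have [k [kj ck]] : exists k, k != j /\ 0 < c k.
  case: (pickP (fun k => (k != j) && (0 < c k))) => [k /andP[? ?]|H].
    by exists k.
  exfalso.
  have Eb : b = c j *: Defs.simple (Phi D) j.
    rewrite {1}(Defs.coordE (Phi D) b) (bigD1 j) //= big1 ?addr0 // => k kj.
    have -> : Defs.coord (Phi D) b k = 0.
      move: (H k); rewrite kj /= => /negbT; rewrite -leNgt => ck; apply/eqP.
      by rewrite eq_le ck; move/forallP: Hpos => /(_ k) ->.
    by rewrite scale0r.
  case: (roots_reduced Rj Hb Eb) => e.
    by move: Eb; rewrite e scale1r => Eb; move: (Hns j); rewrite Eb eqxx.
  by move: cjp; rewrite e; lra.
have Hr : crefl (Phi D) (Defs.simple (Phi D) j) b \in Defs.roots (Phi D) := refl_roots Rj Hb.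
have coordr m : Defs.coord (Phi D) (crefl (Phi D) (Defs.simple (Phi D) j) b) m
    = c m - p * (m == j)%:R by rewrite /crefl /refl coordB coord_simple.
exists j; apply/andP; split.
  rewrite /posroot Hr /=; case/orP: (roots_sign Hr) => // /forallP /(_ k).
  rewrite coordr (negbTE kj) mulr0 subr0 => ck'; exfalso; by move: ck; rewrite ltNge ck'.
rewrite /ht; under eq_bigr do rewrite coordr.
have Sd : \sum_m ((m == j)%:R : R) = 1.
  by rewrite (bigD1 j) //= big1 ?eqxx ?addr0 // => m /negbTE ->.
rewrite sumrB -mulr_sumr Sd mulr1 -/c; lra.
Qed.

Lemma count_strict (T : eqType) (a1 a2 : pred T) (s : seq T) y :
  subpred a1 a2 -> y \in s -> a2 y -> ~~ a1 y -> (count a1 s < count a2 s)%N.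
Proof.
move=> sub; elim: s => // z s IH Hy H2 H1 /=.
case/predU1P: Hy => [<-|Hy].
  by rewrite H2 (negbTE H1) add0n add1n ltnS; apply: sub_count.
have := IH Hy H2 H1; have := sub z; case: (a1 z); case: (a2 z) => //= Hs H; rewrite ?add1n ?add0n.
  by have := Hs isT.
lia.
Qed.

Lemma Lam_root (R : realType) (n : nat) (D : Setting R n) b :
  b \in Defs.roots (Phi D) -> Lam D b.
Proof.
suff Hpos : forall b, posroot (Phi D) b -> Lam D b.
  move=> Hb; case/orP: (pos_or_neg Hb) => [/Hpos //|/negroot_opp/Hpos].
  by move/Lam_opp; rewrite opprK.
have : forall N b, (count (fun g => (ht (Phi D) g < ht (Phi D) b)%R) (Defs.roots (Phi D)) < N)%N ->
    posroot (Phi D) b -> Lam D b.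
  move=> {b}; elim=> // N IH b Hc Hb.
  case: (pickP (fun i => b == Defs.simple (Phi D) i)) => [i /eqP -> | Hns].
    exact: Lam_simple.
  have [j /andP [Hp Hh]] := exists_step Hb (fun i => negbT (Hns i)).
  set b' := crefl (Phi D) (Defs.simple (Phi D) j) b.
  have Rb : b \in Defs.roots (Phi D) by case/andP: Hb.
  have Rj := simple_roots (Phi D) j.
  have Lb' : Lam D b'.
    apply: IH; last exact: Hp.
    rewrite -ltnS; apply: leq_trans Hc; rewrite ltnS.
    apply: (@count_strict _ _ _ _ b').
    - by move=> g /= H; apply: lt_trans H Hh.
    - by case/andP: Hp.
    - by [].
    - by rewrite /= ltxx.
  rewrite -(crefl_invol b Rj).
  by apply: Lam_crefl => //; [apply: refl_roots | apply: Lam_simple].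
by move=> H c Hc; apply: (H _ c (ltnSn _) Hc).
Qed.

Lemma x_unit (R : realType) (n : nat) (D : Setting R n) b :
  b \in Defs.roots (Phi D) -> Defs.iota D (x D b) \is a GRing.unit.
Proof.
move=> Rb; case/orP: (pos_or_neg Rb) => [/iota_unit //|Hn].
have Lb := Lam_root (roots_opp Rb).
have [u [v [uv E]]] := x_opp Lb.
rewrite opprK in E; rewrite E rmorphM unitrM iota_unit ?negroot_opp //=.
by apply/unitrP; exists (Defs.iota D v); rewrite mulrC -rmorphM uv rmorph1.
Qed.

Lemma xPi_unit (R : realType) (n : nat) (D : Setting R n) :
  Defs.iota D (xPi D) \is a GRing.unit.
Proof.
rewrite /xPi rmorph_prod; apply: unitr_prod_in => b Hb _; exact: x_unit.
Qed.

Lemma qU (R : realType) (n : nat) (D : Setting R n) w t :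
  w \in W D -> Defs.iota D t \is a GRing.unit -> Defs.iota D (Defs.sact w t) \is a GRing.unit.
Proof. by move=> Hw Ht; rewrite -qact_iota //; apply: rmorph_unit. Qed.

Lemma qV (R : realType) (n : nat) (D : Setting R n) w t :
  w \in W D -> Defs.iota D t \is a GRing.unit ->
  Defs.qact w (Defs.iota D t)^-1 = (Defs.iota D (Defs.sact w t))^-1.
Proof. by move=> Hw Ht; rewrite rmorphV // qact_iota. Qed.

Lemma qactM (R : realType) (n : nat) (D : Setting R n) u w q :
  u \in W D -> w \in W D -> Defs.qact u (Defs.qact w q) = Defs.qact (u * w)%g q.
Proof.
move=> Hu Hw; have [s [l [Hl ->]]] := iota_surj q.
set p := \prod_(a <- l) x D a.
have Up : Defs.iota D p \is a GRing.unit.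
  rewrite rmorph_prod; apply: unitr_prod_in => a Ha _.
  by apply: iota_unit; move/allP: Hl; apply.
rewrite !rmorphM !qV ?groupM //; last exact: qU.
by rewrite !qact_iota ?groupM // !sactM.
Qed.

Definition ee (R : realType) (n : nat) (D : Setting R n) (w : gT D) : Q D :=
  Defs.iota D (Defs.sact w (xPi D)).

Lemma ee_unit (R : realType) (n : nat) (D : Setting R n) w :
  w \in W D -> ee (D:=D) w \is a GRing.unit.
Proof. by move=> Hw; apply: qU => //; apply: xPi_unit. Qed.

Lemma pushpiE (R : realType) (n : nat) (D : Setting R n) w :
  w \in W D -> pushpi (D:=D) w = (ee (D:=D) w)^-1.
Proof. by move=> Hw; rewrite /pushpi qact_iota. Qed.

Lemma hecke_pi (R : realType) (n : nat) (D : Setting R n) y u :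
  u \in W D -> hecke (D:=D) (pushpi (D:=D)) y u = \sum_(w in W D) y w * (ee (D:=D) w)^-1.
Proof.
move=> Hu; rewrite /hecke -[RHS](sum_reindexL _ Hu).
apply: eq_bigr => w Hw; rewrite pushpiE // qV ?ee_unit // -sactM //.
by rewrite mulrC.
Qed.

Lemma pt_val (R : realType) (n : nat) (D : Setting R n) v t :
  v \in W D -> pt (D:=D) v t = if t == v then ee (D:=D) v else 0.
Proof.
move=> Hv; rewrite /pt /weyl (bigD1 v) //= big1 ?addr0 => [|w /andP [_ /negbTE]].
  rewrite /qdelta eqxx mul1r /pt_e -eq_mulVg1 eq_sym.
  by case: eqP => _; [rewrite qact_iota | rewrite rmorph0].
by rewrite /qdelta => ->; rewrite mul0r.
Qed.

Definition ip (R : realType) (n : nat) (D : Setting R n) (a b : tupQ D) : Q D :=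
  \sum_(w in W D) tmul a b w * (ee (D:=D) w)^-1.

Lemma ip_pt (R : realType) (n : nat) (D : Setting R n) v y :
  v \in W D -> ip (D:=D) (pt (D:=D) v) y = y v.
Proof.
move=> Hv; rewrite /ip (bigD1 v) //= big1 ?addr0 => [|w /andP [_ /negbTE Hw]].
  by rewrite /tmul pt_val // eqxx mulrAC mulrV ?mul1r ?ee_unit.
by rewrite /tmul pt_val // Hw !mul0r.
Qed.

Lemma hecke_delta (R : realType) (n : nat) (D : Setting R n) u t c (F : gT D -> Q D) :
  t \in W D -> \sum_(w in W D) Defs.qact u (qdelta (D:=D) t c w) * F w = Defs.qact u c * F t.
Proof.
move=> Ht; rewrite (bigD1 t) //= /qdelta eqxx big1 ?addr0 // => w /andP [_ /negbTE ->].
by rewrite rmorph0 mul0r.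
Qed.

Lemma hecke_Y (R : realType) (n : nat) (D : Setting R n) i a u :
  u \in W D -> hecke (D:=D) (Ysimple (D:=D) i) a u =
  Defs.qact u (Defs.iota D (x D (- Defs.simple (Phi D) i)))^-1 * a u +
  Defs.qact u (Defs.iota D (x D (Defs.simple (Phi D) i)))^-1 * a (u * sref D (Defs.simple (Phi D) i))%g.
Proof.
move=> Hu; rewrite /hecke /Ysimple /Yroot /qw_add.
under eq_bigr do rewrite rmorphD mulrDl.
rewrite big_split /= !hecke_delta ?group1 ?mulg1 //.
by apply: sref_in; apply: simple_roots.
Qed.

Lemma hecke_comp (R : realType) (n : nat) (D : Setting R n) X Y z v :
  v \in W D -> hecke (D:=D) (qw_mul (D:=D) X Y) z v = hecke (D:=D) X (hecke (D:=D) Y z) v.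
Proof.
move=> Hv; rewrite /hecke /qw_mul.
under eq_bigr do rewrite rmorph_sum mulr_suml.
rewrite exchange_big; apply: eq_bigr => u Hu.
rewrite mulr_sumr -(sum_reindexL _ Hu); apply: eq_bigr => w Hw.
by rewrite mulKg rmorphM qactM // mulgA mulrA.
Qed.

Lemma crefl_opp (R : realType) (n : nat) (P : RootSystem R n) a l :
  crefl P a (- l) = - crefl P a l.
Proof. by rewrite /crefl /refl pairingN; apply/rowP => k; rewrite !mxE; ring. Qed.

Lemma posroot_simple (R : realType) (n : nat) (P : RootSystem R n) i :
  posroot P (Defs.simple P i).
Proof.
rewrite /posroot simple_roots /=; apply/forallP => j; rewrite coord_simple.
by case: (j == i); rewrite ?ler01 ?lexx.
Qed.

Lemma negroot_simple (R : realType) (n : nat) (P : RootSystem R n) i :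
  ~~ negroot P (Defs.simple P i).
Proof.
apply/negP => /andP [/andP [_ /forallP /(_ i)]]; rewrite coord_simple eqxx => H _.
by move: H; rewrite ler10.
Qed.

Lemma neg_not_mult (R : realType) (n : nat) (P : RootSystem R n) i b :
  negroot P b -> b != - Defs.simple P i ->
  exists k, k != i /\ Defs.coord P b k < 0.
Proof.
move=> Hn Hne; have Hn' := Hn; case/andP: Hn' => /andP [Hb /forallP Hc] _.
case: (pickP (fun k => (k != i) && (Defs.coord P b k < 0))) => [k /andP[? ?]|H].
  by exists k.
exfalso.
have Eb : b = Defs.coord P b i *: Defs.simple P i.
  rewrite {1}(Defs.coordE P b) (bigD1 i) //= big1 ?addr0 // => k ki.
  have -> : Defs.coord P b k = 0.
    move: (H k); rewrite ki /= => /negbT; rewrite -leNgt => c0; apply/eqP.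
    by rewrite eq_le c0 Hc.
  by rewrite scale0r.
case: (roots_reduced (simple_roots P i) Hb Eb) => e; rewrite e in Eb.
  by move: Hn; rewrite Eb scale1r (negbTE (negroot_simple _ _)).
by move: Hne; rewrite Eb scaleN1r eqxx.
Qed.

Lemma s_neg (R : realType) (n : nat) (P : RootSystem R n) i b :
  negroot P b -> b != - Defs.simple P i ->
  negroot P (crefl P (Defs.simple P i) b) &&
  (crefl P (Defs.simple P i) b != - Defs.simple P i).
Proof.
move=> Hn Hne; have [k [ki ck]] := neg_not_mult Hn Hne.
have Hb : b \in Defs.roots P by case/andP: Hn => /andP [].
have Ri := simple_roots P i.
have Hr := refl_roots Ri Hb.
have Ck : Defs.coord P (crefl P (Defs.simple P i) b) k = Defs.coord P b k.
  by rewrite /crefl /refl coordB coord_simple (negbTE ki) mulr0 subr0.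
apply/andP; split.
  rewrite /negroot Hr (roots_neq0 Hr) andbT /=.
  case/orP: (roots_sign Hr) => // /forallP /(_ k); rewrite Ck => c0.
  by exfalso; move: ck; rewrite ltNge c0.
apply/eqP => E; have := crefl_invol b Ri.
rewrite E crefl_opp crefl_self // opprK => Eb.
by move: Hn; rewrite -Eb (negbTE (negroot_simple _ _)).
Qed.

Lemma K_ident (R : realType) (n : nat) (D : Setting R n) i :
  sact (sref D (Defs.simple (Phi D) i)) (xPi D * x D (Defs.simple (Phi D) i))
  = xPi D * x D (Defs.simple (Phi D) i).
Proof.
set a := Defs.simple (Phi D) i.
set s := sref D a.
have Ra : a \in Defs.roots (Phi D) := simple_roots _ i.
have Hs : s \in W D := sref_in Ra.
set N := [seq b <- Defs.roots (Phi D) | negroot (Phi D) b].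
have xPiE : xPi D = \prod_(b <- N) x D b by rewrite /xPi big_filter.
have sx b : b \in Defs.roots (Phi D) -> sact s (x D b) = x D (crefl (Phi D) a b).
  by move=> Hb; rewrite sact_x //; [rewrite /s wact_sref | apply: Lam_root].
have mN : - a \in N by rewrite mem_filter posroot_opp ?posroot_simple // roots_opp.
have uN : uniq N by rewrite filter_uniq // roots_uniq.
have memN b : b \in N -> b \in Defs.roots (Phi D) by rewrite mem_filter => /andP [].
rewrite rmorphM xPiE rmorph_prod !(bigD1_seq (- a) mN uN) /=.
rewrite !sx ?roots_opp // crefl_opp crefl_self // opprK.
have E : \prod_(b <- N | b != - a) sact s (x D b) = \prod_(b <- N | b != - a) x D b.
  rewrite -[LHS]big_filter -[RHS]big_filter.
  set N' := [seq b <- N | b != - a].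
  have sN b : b \in N' -> crefl (Phi D) a b \in N'.
    rewrite !mem_filter => /andP [nb /andP [negb rb]].
    have /andP [neg' ne'] := s_neg negb nb.
    by rewrite ne' neg' refl_roots.
  transitivity (\prod_(b <- N') x D (crefl (Phi D) a b)).
    apply: eq_big_seq => b Hb; apply: sx; apply: memN.
    by move: Hb; rewrite mem_filter => /andP[].
  have -> : \prod_(b <- N') x D (crefl (Phi D) a b)
      = \prod_(b <- map (crefl (Phi D) a) N') x D b by rewrite big_map.
  apply: perm_big; apply: uniq_perm.
  - rewrite map_inj_uniq ?filter_uniq ?roots_uniq //.
    by apply: (@can_inj _ _ _ (crefl (Phi D) a)) => l; apply: crefl_invol.
  - by rewrite !filter_uniq ?roots_uniq.
  move=> b; apply/mapP/idP => [[b0 Hb0 ->] | Hb]; first exact: sN.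
  by exists (crefl (Phi D) a b); [exact: sN | rewrite crefl_invol].
rewrite E -!mulrA [LHS]mulrCA [RHS]mulrCA [x D a * _]mulrC.
done.
Qed.

Lemma key_gen (R : realType) (n : nat) (D : Setting R n) i w :
  w \in W D ->
  Defs.qact w (Defs.iota D (x D (Defs.simple (Phi D) i)))^-1 * (ee (D:=D) w)^-1
  = (Defs.iota D (sact w (xPi D * x D (Defs.simple (Phi D) i))))^-1.
Proof.
move=> Hw; have Ra := simple_roots (Phi D) i.
rewrite qV ?x_unit // /ee [in RHS]rmorphM [in RHS]rmorphM invrM //.
  by apply: qU => //; apply: xPi_unit.
by apply: qU => //; apply: x_unit.
Qed.

Lemma ss1 (R : realType) (n : nat) (D : Setting R n) a :
  a \in Defs.roots (Phi D) -> (sref D a * sref D a)%g = 1%g.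
Proof.
move=> Ha; have Hs := sref_in Ha.
apply: wact_faithful; rewrite ?groupM ?group1 // => l.
by rewrite wactM // wact1 !wact_sref // crefl_invol.
Qed.

Lemma key2 (R : realType) (n : nat) (D : Setting R n) i u :
  u \in W D ->
  let s := sref D (Defs.simple (Phi D) i) in
  Defs.qact (u * s)%g (Defs.iota D (x D (Defs.simple (Phi D) i)))^-1 * (ee (D:=D) (u * s)%g)^-1
  = Defs.qact u (Defs.iota D (x D (Defs.simple (Phi D) i)))^-1 * (ee (D:=D) u)^-1.
Proof.
move=> Hu s; have Hs : s \in W D by apply: sref_in; apply: simple_roots.
by rewrite !key_gen ?groupM // sactM // K_ident.
Qed.

Lemma ip_Y (R : realType) (n : nat) (D : Setting R n) i (a b : tupQ D) :
  ip (hecke (Ysimple (D:=D) i) a) b = ip a (hecke (Ysimple (D:=D) i) b).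
Proof.
have Hs : sref D (Defs.simple (Phi D) i) \in W D by apply: sref_in; apply: simple_roots.
set s := sref D (Defs.simple (Phi D) i).
set c := fun u => Defs.qact u (Defs.iota D (x D (- Defs.simple (Phi D) i)))^-1.
set d := fun u => Defs.qact u (Defs.iota D (x D (Defs.simple (Phi D) i)))^-1.
rewrite /ip /tmul.
transitivity (\sum_(u in W D) c u * a u * b u * (ee u)^-1 +
              \sum_(u in W D) d u * a (u * s)%g * b u * (ee u)^-1).
  by rewrite -big_split; apply: eq_bigr => u Hu; rewrite hecke_Y //=; ring.
transitivity (\sum_(u in W D) c u * a u * b u * (ee u)^-1 +
              \sum_(u in W D) a u * d u * b (u * s)%g * (ee u)^-1); last first.
  by rewrite -big_split; apply: eq_bigr => u Hu; rewrite hecke_Y //=; ring.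
congr (_ + _).
rewrite -[RHS](sum_reindexR _ Hs); apply: eq_bigr => u Hu.
rewrite -mulgA ss1 ?simple_roots // mulg1.
have K2 := key2 i Hu; rewrite -/s in K2.
transitivity (a (u * s)%g * b u * (d u * (ee u)^-1)); first by rewrite /d; ring.
rewrite /d -K2; ring.
Qed.

Definition HI (R : realType) (n : nat) (D : Setting R n) (I : seq 'I_n) (a : tupQ D) :=
  foldr (fun i acc => hecke (Ysimple (D:=D) i) acc) a I.

Lemma hecke_ext (R : realType) (n : nat) (D : Setting R n) X (a a' : tupQ D) v :
  (forall w, w \in W D -> a w = a' w) -> v \in W D ->
  hecke X a v = hecke X a' v.
Proof. by move=> H Hv; apply: eq_bigr => w Hw; rewrite H // groupM. Qed.

Lemma Yword_HI (R : realType) (n : nat) (D : Setting R n) I (a : tupQ D) v :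
  v \in W D -> hecke (Yword (D:=D) I) a v = HI I a v.
Proof.
elim: I v => [|i I IH] v Hv /=.
  by rewrite /hecke hecke_delta ?group1 // rmorph1 mul1r mulg1.
by rewrite hecke_comp //; apply: hecke_ext.
Qed.

Lemma ip_ext (R : realType) (n : nat) (D : Setting R n) (a a' b b' : tupQ D) :
  (forall w, w \in W D -> a w = a' w) -> (forall w, w \in W D -> b w = b' w) ->
  ip a b = ip a' b'.
Proof. by move=> Ha Hb; apply: eq_bigr => w Hw; rewrite /tmul Ha ?Hb. Qed.

Lemma ip_HI (R : realType) (n : nat) (D : Setting R n) I (a b : tupQ D) :
  ip (HI (rev I) a) b = ip a (HI I b).
Proof.
elim: I a b => [|i I IH] a b //=.
by rewrite rev_cons /HI foldr_rcons -/(HI _ _) IH ip_Y.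
Qed.

Unset Implicit Arguments.

Theorem lemma3p5 (R : realType) (n : nat) (D : Setting R n)
  (z : gT D -> S D) (v w : gT D) (I : seq 'I_n) :
  inZ z -> v \in W D -> w \in W D -> @reduced_expr _ _ D I w ->
  (forall u, u \in W D ->
     hecke (@pushpi _ _ D) (tmul (zeta v I) (toQ z)) u
     = hecke (@pushpi _ _ D) (tmul (pt v) (hecke (@Yword _ _ D I) (toQ z))) u) /\
  (forall u, u \in W D ->
     hecke (@pushpi _ _ D) (tmul (pt v) (hecke (@Yword _ _ D I) (toQ z))) u
     = hecke (@Yword _ _ D I) (toQ z) v * @tone _ _ D u).
Proof.
move=> _ Hv _ _; split => u Hu.
  rewrite !hecke_pi // -/(ip _ _) -/(ip _ _) /zeta.
  rewrite (@ip_ext _ _ _ _ (HI (rev I) (pt v)) _ (toQ z)); last 2 first.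
  - by move=> t Ht; apply: Yword_HI.
  - by [].
  rewrite ip_HI; apply: ip_ext => // t Ht.
  by rewrite Yword_HI.
by rewrite hecke_pi // -/(ip _ _) ip_pt // /tone mulr1.
Qed.
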